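(* Let $G$ be a graph with $n\ge5$ vertices that has a fractional weak $r$-neighborhood cover $(\mathcal X,f)$ with degree $d$ and spread $s$. Then $G$ has a weak $r$-neighborhood cover $\mathcal Y\subseteq\mathcal X$ with degree $36\ln(n)\,d$ and spread $s$.
   Context: A fractional weak $r$-neighborhood cover with degree $d$ and spread $s$ of $G$ is a family $\mathcal X$ of subsets of $V(G)$ with a function $f\colon\mathcal X\to[0,1]$ such that each $X\in\mathcal X$ is contained in $N_s[c]$ for some vertex $c$; for every vertex $v$, $\sum_{X\in\mathcal X:\,N_r[v]\subseteq X}f(X)\ge1$; and for every vertex $v$, $\sum_{X\in\mathcal X:\,v\in X}f(X)\le d$. A (non-fractional) weak $r$-neighborhood cover with degree $d$ and spread $s$ is a family of vertex sets, each contained in some $N_s[c]$, such that each $N_r[w]$ is contained in some member and each vertex lies in at most $d$ members. *)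

(* Defs.v *)
From HB Require Import structures.
From mathcomp Require Import all_boot all_order all_algebra.
From mathcomp Require Import reals exp.
Set Implicit Arguments. Unset Strict Implicit. Unset Printing Implicit Defensive.
Import Order.TTheory GRing.Theory Num.Theory.

Definition simple_graph (T : finType) (e : rel T) : Prop :=
  symmetric e /\ irreflexive e.

Fixpoint nball (T : finType) (e : rel T) (r : nat) (v : T) : {set T} :=
  match r with
  | 0 => [set v]
  | k.+1 => nball e k v :|: [set w | [exists u in nball e k v, e u w]]
  end.

Local Open Scope ring_scope.

Definition frac_weak_nbhd_cover (R : realType) (T : finType) (e : rel T)
    (r s : nat) (d : R) (Xs : {set {set T}}) (f : {set T} -> R) : Prop :=
  [/\ forall X, X \in Xs -> 0 <= f X <= 1,
      forall X, X \in Xs -> exists c : T, X \subset nball e s c,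
      forall v : T, 1 <= \sum_(X in Xs | nball e r v \subset X) f X
    & forall v : T, \sum_(X in Xs | v \in X) f X <= d].

Definition weak_nbhd_cover (R : realType) (T : finType) (e : rel T)
    (r s : nat) (D : R) (Ys : {set {set T}}) : Prop :=
  [/\ forall Y, Y \in Ys -> exists c : T, Y \subset nball e s c,
      forall w : T, exists2 Y, Y \in Ys & nball e r w \subset Y
    & forall v : T, (#|[set Y in Ys | v \in Y]|%:R : R) <= D].

(* Main.v *)
Require Import Defs.
From HB Require Import structures.
From mathcomp Require Import all_boot all_order all_algebra.
From mathcomp Require Import reals exp.
From mathcomp Require Import sequences lra.
Import Order.TTheory GRing.Theory Num.Theory.
Local Open Scope ring_scope.

Lemma expect_prod (R : realType) (I : finType) (p : I -> R) (h : I -> bool -> R) :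
  \sum_(g : {ffun I -> bool})
     ((\prod_i (if g i then p i else 1 - p i)) * \prod_i h i (g i))
  = \prod_i (p i * h i true + (1 - p i) * h i false).
Proof.
symmetry.
transitivity (\prod_i \sum_(b : bool) ((if b then p i else 1 - p i) * h i b)).
  by apply: eq_bigr => i _; rewrite big_bool.
rewrite bigA_distr_bigA; apply: eq_bigr => g _; by rewrite -big_split.
Qed.

Arguments expect_prod {R I}.

Lemma in_nball (T : finType) (e : rel T) r v : v \in nball e r v.
Proof. elim: r => [|r IH] /=; first by rewrite inE. by rewrite inE IH. Qed.

Lemma expR1_le4 (R : realType) : expR 1 <= 4 :> R.
Proof.
have h : expR (1/2) <= 2 :> R.
  have := expR_ge1Dx (- (1/2) : R).
  rewrite expRN => H.
  have hp : 0 < expR (1/2 : R) := expR_gt0 _.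
  rewrite -(@ler_pM2r _ (expR (1/2 : R))) // mulVf ?gt_eqF // in H.
  lra.
have -> : (1 : R) = 1/2 + 1/2 by lra.
rewrite expRD.
have hp : 0 < expR (1/2 : R) := expR_gt0 _.
nra.
Qed.

Lemma arith_h2 (R : realType) (L d : R) : 1 <= L -> 1 <= d ->
  L + (3 * ((L + 1) * d) - 36 * L * d) <= -1.
Proof. move=> hL hd; have hLd : 1 <= L * d by nra. nra. Qed.

Lemma arith_fin (R : realType) (t E : R) : 0 < t -> E * t = 1 -> 2 < E -> t + t < 1.
Proof. move=> *; nra. Qed.

Lemma arith_fac (R : realType) (p E x : R) : 0 <= p -> p <= 1 -> 0 <= E -> E <= 4 ->
  1 + 3 * p <= x -> 0 <= p * E + (1 - p) * 1 <= x.
Proof. move=> *; apply/andP; split; nra. Qed.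

Lemma sum_const_nat (R : realType) (T : finType) (x : R) :
  \sum_(v : T) x = #|T|%:R * x.
Proof. by rewrite sumr_const mulr_natl. Qed.

Theorem lemma6p5 (R : realType) (T : finType) (e : rel T) (r s : nat) (d : R)
    (Xs : {set {set T}}) (f : {set T} -> R) :
  simple_graph e -> (5 <= #|T|)%N ->
  frac_weak_nbhd_cover e r s d Xs f ->
  exists Ys : {set {set T}}, Ys \subset Xs /\
    weak_nbhd_cover e r s (36 * ln (#|T|%:R : R) * d) Ys.
Proof.
move=> _ Hn [Hf01 Hcent Hcov Hdeg].
set n := #|T|.
set L := ln (n%:R : R).
have e4 := @expR1_le4 R.
have e2 : 2 < expR 1 :> R.
  have := @expR_gt1Dx R 1 (oner_neq0 _). lra.
have npos : (0 : R) < n%:R by rewrite ltr0n; apply: leq_trans Hn.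
have nE : expR L = n%:R by rewrite /L lnK // posrE.
have L1 : 1 <= L.
  rewrite -ler_expR nE; apply: (le_trans e4).
  by rewrite ler_nat; apply: leq_trans Hn.
have [v0 _] : exists v : T, v \in T.
  by apply/card_gt0P; apply: leq_trans Hn.
have fge0 X : X \in Xs -> 0 <= f X by move=> /Hf01 /andP [].
have d1 : 1 <= d.
  apply: (le_trans (Hcov v0)); apply: (le_trans _ (Hdeg v0)).
  rewrite big_mkcond [X in _ <= X]big_mkcond /=.
  apply: ler_sum => X _.
  case XXs: (X \in Xs) => //=; case: ifP => sub.
    by rewrite (subsetP sub _ (@in_nball _ e r v0)).
  by case: ifP => // _; apply: fge0.
pose c := L + 1.
have c0 : 0 <= c by rewrite /c addr_ge0 // (le_trans ler01 L1).
pose p X := if X \in Xs then Order.min 1 (c * f X) else 0.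
have p01 X : 0 <= p X <= 1.
  rewrite /p; case: ifP => XXs; last by rewrite lexx ler01.
  rewrite ge_min lexx /= le_min ler01 /=.
  by rewrite mulr_ge0 // fge0.
have pc X : X \in Xs -> p X <= c * f X.
  by move=> XXs; rewrite /p XXs ge_min lexx orbT.
pose w (g : {ffun {set T} -> bool}) :=
  \prod_X (if g X then p X else 1 - p X).
pose U (v : T) (g : {ffun {set T} -> bool}) :=
  \prod_(X : {set T}) (if nball e r v \subset X then (~~ g X)%:R else 1) : R.
pose D := 36 * L * d.
pose V (v : T) (g : {ffun {set T} -> bool}) :=
  expR (- D) * \prod_(X : {set T}) (if v \in X then (if g X then expR 1 else 1) else 1).
pose Phi g := \sum_v U v g + \sum_v V v g.
have wge0 g : 0 <= w g.
  apply: prodr_ge0 => X _; have /andP [h1 h2] := p01 X.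
  by case: (g X) => //; rewrite subr_ge0.
have Uge0 v g : 0 <= U v g.
  by apply: prodr_ge0 => X _; case: ifP => // _; case: (g X).
have Vge0 v g : 0 <= V v g.
  apply: mulr_ge0; first exact: expR_ge0.
  apply: prodr_ge0 => X _; case: ifP => // _; case: (g X) => //.
  exact: expR_ge0.
have sumw : \sum_g w g = 1.
  have H := expect_prod p (fun _ _ => (1 : R)).
  rewrite (eq_bigr (fun g => w g)) in H; last by move=> g _; rewrite big1_eq mulr1.
  rewrite H; apply: big1 => X _; by rewrite !mulr1 addrC subrK.
have EU v : \sum_g w g * U v g <= expR (- c).
  rewrite /w /U (expect_prod p (fun (X : {set T}) b => if nball e r v \subset X then (~~ b)%:R else 1)).
  rewrite (eq_bigr (fun (X : {set T}) => if nball e r v \subset X then 1 - p X else 1)); last first.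
    move=> X _; case: ifP => _ /=; first by rewrite mulr0 add0r mulr1.
    by rewrite !mulr1 addrC subrK.
  case: (pickP (fun (X : {set T}) => [&& X \in Xs, nball e r v \subset X & 1 <= c * f X])).
    move=> X /and3P [XXs sub cf].
    rewrite (bigD1 X) //= sub /p XXs min_l // subrr mul0r; exact: expR_ge0.
  move=> Hnone.
  apply: (le_trans (y := \prod_(X : {set T}) expR (- (if nball e r v \subset X then p X else 0)))).
    apply: ler_prod => X _; case: ifP => _; last by rewrite oppr0 expR0 lexx ler01.
    have /andP [h1 h2] := p01 X.
    by rewrite subr_ge0 h2 /=; have := expR_ge1Dx (- p X).
  rewrite -expR_sum ler_expR sumrN lerN2.
  have -> : \sum_(X : {set T}) (if nball e r v \subset X then p X else 0)
          = c * \sum_(X in Xs | nball e r v \subset X) f X.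
    rewrite mulr_sumr [in RHS]big_mkcond /=; apply: eq_bigr => X _.
    case: ifP => sub; rewrite ?andbT ?andbF; last by case: (X \in Xs).
    rewrite /p; case: ifP => // XXs.
    have := Hnone X; rewrite XXs sub /= => /negbT; rewrite -ltNge => cf.
    by rewrite min_r // ltW.
  by rewrite -{1}(mulr1 c) ler_wpM2l.
have EV v : \sum_g w g * V v g <= expR (3 * (c * d) - D).
  rewrite /V; under eq_bigr do rewrite mulrCA.
  rewrite -mulr_sumr /w (expect_prod p (fun (X : {set T}) b =>
     if v \in X then (if b then expR 1 else 1) else 1)).
  apply: (le_trans (y := expR (- D) * \prod_(X : {set T})
             expR (if v \in X then 3 * p X else 0))).
    rewrite ler_wpM2l ?expR_ge0 //; apply: ler_prod => X _.
    have /andP [h1 h2] := p01 X.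
    case: ifP => _ /=; last by rewrite !mulr1 addrC subrK expR0 ler01 lexx.
    by apply: arith_fac => //; [exact: expR_ge0 | exact: expR_ge1Dx].
  rewrite -expR_sum -expRD ler_expR addrC lerD2r.
  have -> : \sum_(X : {set T}) (if v \in X then 3 * p X else 0)
      = 3 * \sum_(X : {set T}) (if v \in X then p X else 0).
    by rewrite mulr_sumr; apply: eq_bigr => X _; case: ifP; rewrite ?mulr0.
  rewrite ler_pM2l; last by rewrite ltr0n.
  apply: (le_trans (y := \sum_(X in Xs | v \in X) c * f X)).
    rewrite [in X in _ <= X]big_mkcond /=; apply: ler_sum => X _.
    case: ifP => vX; rewrite ?andbT ?andbF; last by case: (X \in Xs).
    rewrite /p; case: ifP => XXs; last by [].
    by rewrite ge_min lexx orbT.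
  by rewrite -mulr_sumr ler_wpM2l.
have EPhi : \sum_g w g * Phi g
    = \sum_v \sum_g w g * U v g + \sum_v \sum_g w g * V v g.
  rewrite /Phi; under eq_bigr do rewrite mulrDr !mulr_sumr.
  by rewrite big_split /=; congr (_ + _); apply: exchange_big.
have Elt : \sum_g w g * Phi g < 1.
  rewrite EPhi.
  apply: (le_lt_trans (y := \sum_(v : T) expR (- c) + \sum_(v : T) expR (3 * (c * d) - D))).
    have hU : \sum_v \sum_g w g * U v g <= \sum_(v : T) expR (- c).
      by apply: ler_sum => v _; exact: EU.
    have hV : \sum_v \sum_g w g * V v g <= \sum_(v : T) expR (3 * (c * d) - D).
      by apply: ler_sum => v _; exact: EV.
    exact: lerD hU hV.
  rewrite !sum_const_nat.
  rewrite -nE.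
  rewrite -!expRD.
  have h1 : L + - c = -1 by rewrite /c opprD addrA subrr add0r.
  have h2 : L + (3 * (c * d) - D) <= -1 by rewrite /c /D; apply: arith_h2.
  rewrite h1.
  apply: (le_lt_trans (y := expR (-1) + expR (-1))).
    by rewrite lerD2l ler_expR.
  exact: arith_fin (expR_gt0 _) (expRxMexpNx_1 _) e2.
case: (pickP (fun g => (0 < w g) && (Phi g < 1))); last first.
  move=> Hnone; exfalso.
  have : 1 <= \sum_g w g * Phi g.
    rewrite -sumw; apply: ler_sum => g _.
    have := Hnone g; have := wge0 g; rewrite le0r; case/orP => [/eqP -> | wp].
      by rewrite mul0r.
    rewrite wp /= => /negbT; rewrite -leNgt => Pg.
    by rewrite -{1}(mulr1 (w g)) ler_wpM2l ?wge0.
  by rewrite leNgt Elt.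
move=> g /andP [wpos Phig].
have Hsub : [set X | g X] \subset Xs.
  apply/subsetP => X; rewrite inE => gX; apply/negPn/negP => XnXs.
  move: wpos; rewrite /w (bigD1 X) //= gX /p (negbTE XnXs) mul0r.
  by rewrite ltxx.
exists [set X | g X]; split => //; split.
- by move=> Y /(subsetP Hsub); apply: Hcent.
- move=> w0.
  have Uw : U w0 g < 1.
    apply: le_lt_trans Phig; rewrite /Phi (bigD1 w0) //= -addrA lerDl.
    by rewrite addr_ge0 // sumr_ge0.
  case: (pickP (fun X : {set T} => (nball e r w0 \subset X) && g X)).
    by move=> X /andP [sub gX]; exists X; rewrite ?inE.
  move=> none; exfalso.
  move: Uw; rewrite /U big1 ?ltxx // => X _.
  by case: ifP => // sub; have := none X; rewrite sub /= => ->.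
- move=> v.
  have Vv : V v g < 1.
    apply: le_lt_trans Phig; rewrite /Phi [X in _ + X](bigD1 v) //= addrCA lerDl.
    by rewrite addr_ge0 // sumr_ge0.
  move: Vv; rewrite /V.
  have -> : \prod_(X : {set T}) (if v \in X then (if g X then expR 1 else 1) else 1)
      = \prod_(X in [set Y in [set X | g X] | v \in Y]) expR 1 :> R.
    rewrite [in RHS]big_mkcond; apply: eq_bigr => X _; rewrite !inE.
    by case: (v \in X); case: (g X).
  rewrite prodr_const -expRM_natl mulr1 -expRD expR_lt1 addrC subr_lt0 => h.
  exact: ltW.
Qed.
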